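(* Let $U,V$ be nonempty sets, $A$ a fuzzy subset of $U$ and $B$ a fuzzy subset of $V$. Let $\odot$ be a semi-overlap function having $1$ as neutral element and $\rightarrow$ its residual implication. Suppose $A$ is normal, i.e. there is $u_0\in U$ with $A(u_0)=1$. If $A^*=A$, then the fuzzy subset $B^*$ of $V$ defined by $$B^*(v)=\sup_{u\in U}\big\{A^*(u)\odot[(A^*(u)\rightarrow A(u))\odot(A(u)\rightarrow B(v))]\big\}$$ satisfies $B^*=B$.
   Context: A semi-overlap function is a function $\odot:[0,1]^2\to[0,1]$ such that for all $u,v\in[0,1]$: $u\odot v=v\odot u$; if $uv=0$ then $u\odot v=0$; if $uv=1$ then $u\odot v=1$; $\odot$ is increasing in each variable; and $\odot$ is left-continuous: $u\odot\sup_{i\in I}v_i=\sup_{i\in I}(u\odot v_i)$ for every $u$ and nonempty family $\{v_i\}_{i\in I}\subseteq[0,1]$. $1$ is a neutral element if $1\odot v=v$ for all $v$. The residual implication is $a\rightarrow b=\sup\{w\in[0,1]\mid a\odot w\le b\}$. A fuzzy subset of $U$ is a function $U\to[0,1]$. (The displayed $B^*$ is the FMP-solution of the quintuple implication principle for rule $A\rightarrow B$ and input $A^*$; the paper phrases the theorem as ''the FMP problem satisfies the reversibility of QIP method''.) *)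

(* Defs.v *)
From Stdlib Require Import Reals.
From Coquelicot Require Import Coquelicot.
Open Scope R_scope.

Definition unit_int (x : R) : Prop := 0 <= x <= 1.

Definition supR (E : R -> Prop) : R := real (Lub_Rbar E).

Definition semi_overlap (o : R -> R -> R) : Prop :=
  (forall u v, unit_int u -> unit_int v -> unit_int (o u v)) /\
  (forall u v, unit_int u -> unit_int v -> o u v = o v u) /\
  (forall u v, unit_int u -> unit_int v -> u * v = 0 -> o u v = 0) /\
  (forall u v, unit_int u -> unit_int v -> u * v = 1 -> o u v = 1) /\
  (forall u v w, unit_int u -> unit_int v -> unit_int w -> v <= w ->
     o u v <= o u w) /\
  (forall u v w, unit_int u -> unit_int v -> unit_int w -> u <= v ->
     o u w <= o v w) /\
  (* left-continuity: u ⊙ sup v_i = sup (u ⊙ v_i) for nonempty families *)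
  (forall (I : Type) (vs : I -> R) u, unit_int u -> (exists i : I, True) ->
     (forall i, unit_int (vs i)) ->
     o u (supR (fun x => exists i, x = vs i)) =
     supR (fun x => exists i, x = o u (vs i))).

Definition one_neutral (o : R -> R -> R) : Prop :=
  forall v, unit_int v -> o 1 v = v.

Definition resid (o : R -> R -> R) (a b : R) : R :=
  supR (fun w => unit_int w /\ o a w <= b).

Definition fuzzy_subset (U : Type) (A : U -> R) : Prop :=
  forall u, unit_int (A u).

Definition qip_fmp (o : R -> R -> R) {U V : Type} (A Astar : U -> R)
  (B : V -> R) (v : V) : R :=
  supR (fun x => exists u : U,
    x = o (Astar u) (o (resid o (Astar u) (A u)) (resid o (A u) (B v)))).

(* Main.v *)
Require Import Defs.
From Stdlib Require Import Reals Lra FunctionalExtensionality PropExtensionality.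
From Coquelicot Require Import Coquelicot.
Open Scope R_scope.

Lemma supR_fin (E : R -> Prop) (M x : R) :
  (forall y, E y -> y <= M) -> E x ->
  x <= supR E /\ supR E <= M.
Proof.
  intros Hb Hx. unfold supR.
  destruct (Lub_Rbar_correct E) as [Hub Hlub].
  assert (H1 := Hub x Hx).
  assert (H2 := Hlub (Finite M) Hb).
  destruct (Lub_Rbar E) as [r| |]; simpl in *; try contradiction.
  split; assumption.
Qed.

Theorem theorem4p4 (U V : Type) (u1 : U) (v1 : V)
  (A : U -> R) (B : V -> R) (o : R -> R -> R)
  (HA : fuzzy_subset U A) (HB : fuzzy_subset V B)
  (Ho : semi_overlap o) (Hn : one_neutral o)
  (Hnorm : exists u0 : U, A u0 = 1)
  (Astar : U -> R) (Heq : Astar = A) :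
  forall v : V, qip_fmp o A Astar B v = B v.
Proof.
  destruct Ho as [Hrange [Hcomm [H0 [H1 [Hmono2 [Hmono1 Hlc]]]]]].
  assert (U0 : unit_int 0) by (unfold unit_int; lra).
  assert (U1 : unit_int 1) by (unfold unit_int; lra).
  assert (Hset : forall a b, unit_int a -> unit_int b ->
    (forall y, (unit_int y /\ o a y <= b) -> y <= 1) /\ (unit_int 0 /\ o a 0 <= b)).
  { intros a b ua ub. split.
    - intros y [[_ Hy] _]; exact Hy.
    - split; [exact U0|]. rewrite H0; auto; [apply ub| ring]. }
  assert (Hru : forall a b, unit_int a -> unit_int b -> unit_int (resid o a b)).
  { intros a b ua ub. destruct (Hset a b ua ub) as [Hb Hx].
    destruct (supR_fin _ _ _ Hb Hx). unfold resid; split; lra. }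
  assert (Haa : forall a, unit_int a -> resid o a a = 1).
  { intros a ua. destruct (Hset a a ua ua) as [Hb _].
    assert (Hx : unit_int 1 /\ o a 1 <= a).
    { split; auto. rewrite Hcomm, Hn; auto; lra. }
    destruct (supR_fin _ _ _ Hb Hx). unfold resid; lra. }
  assert (H1b : forall b, unit_int b -> resid o 1 b = b).
  { intros b ub.
    assert (Hb : forall y, (unit_int y /\ o 1 y <= b) -> y <= b).
    { intros y [uy Hy]. rewrite Hn in Hy; auto. }
    assert (Hx : unit_int b /\ o 1 b <= b) by (split; [exact ub | rewrite Hn; [apply Rle_refl | exact ub]]).
    destruct (supR_fin _ _ _ Hb Hx). unfold resid; lra. }
  assert (Hle : forall a b, unit_int a -> unit_int b -> o a (resid o a b) <= b).
  { intros a b ua ub.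
    set (I := {w : R | unit_int w /\ o a w <= b}).
    destruct (Hset a b ua ub) as [_ Hx0].
    assert (HI : exists i : I, True) by (exists (exist _ 0 Hx0); auto).
    assert (Hvs : forall i : I, unit_int (proj1_sig i)) by (intro i; exact (proj1 (proj2_sig i))).
    pose proof (Hlc I (fun i => proj1_sig i) a ua HI Hvs) as Hl.
    assert (Heqs : supR (fun x => exists i : I, x = proj1_sig i) = resid o a b).
    { unfold resid. f_equal. apply functional_extensionality; intro x.
      apply propositional_extensionality. split.
      - intros [[w Hw] ->]. exact Hw.
      - intros Hw. exists (exist _ x Hw). reflexivity. }
    simpl in Hl. rewrite Heqs in Hl. rewrite Hl.
    assert (Hb : forall y, (exists i : I, y = o a (proj1_sig i)) -> y <= b).
    { intros y [i Hy]. rewrite Hy. exact (proj2 (proj2_sig i)). }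
    assert (Hx : exists i : I, o a 0 = o a (proj1_sig i))
      by (exists (exist _ 0 Hx0); reflexivity).
    destruct (supR_fin _ _ _ Hb Hx). lra. }
  intro v. subst Astar. unfold qip_fmp.
  assert (Hterm : forall u, o (A u) (o (resid o (A u) (A u)) (resid o (A u) (B v)))
                            = o (A u) (resid o (A u) (B v))).
  { intro u. rewrite Haa by apply HA. rewrite Hn; auto. }
  destruct Hnorm as [u0 Hu0].
  assert (Hb : forall y, (exists u, y = o (A u) (o (resid o (A u) (A u)) (resid o (A u) (B v)))) -> y <= B v).
  { intros y [u ->]. rewrite Hterm. apply Hle; auto. }
  assert (Hx : exists u, B v = o (A u) (o (resid o (A u) (A u)) (resid o (A u) (B v)))).
  { exists u0. rewrite Hterm, Hu0, Hn, H1b; auto. }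
  destruct (supR_fin _ _ _ Hb Hx). lra.
Qed.
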